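(* Let $n\ge1$, identify $\mathbb{R}^{n+1}=\mathbb{R}^n\times\mathbb{R}$, and let $K\subset\mathbb{R}^{n+1}$ be a convex compact set containing a point $(x_*,y_* )$ with $y_*\le0$. Then the following are equivalent: (a) for every positive-valued continuous function $f\colon\mathbb{R}^n\to\mathbb{R}$ whose epigraph $L$ satisfies $K\cap L=\emptyset$, the upper and lower equidistant functions associated with $K$ and $L$ satisfy $G^-(x)=G^+(x)$ for all $x\in\mathbb{R}^n$; (b) the same holds for every positive-valued convex function $f\colon\mathbb{R}^n\to\mathbb{R}$ whose epigraph is disjoint from $K$; (c) there exist no point $x_0\in\mathbb{R}^n$ and real numbers $0<y_1<y_2$ such that $(x_0,y_1)\notin K$ and $(x_0,y_2)\in K$.
   Context: $d(p,A)=\inf\{|p-q|\mid q\in A\}$ (Euclidean distance); $L=\{(x,y)\mid f(x)\le y\}$. The upper and lower equidistant functions are $G^+(x)=\sup\{y\mid d((x,y),K)=d((x,y),L)\}$ and $G^-(x)=\inf\{y\mid d((x,y),K)=d((x,y),L)\}$ (real numbers under these assumptions). *)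

(* Defs.v *)
From HB Require Import structures.
From mathcomp Require Import all_boot all_order all_algebra.
From mathcomp Require Import all_classical all_reals all_analysis.
Set Implicit Arguments. Unset Strict Implicit. Unset Printing Implicit Defensive.
Import Order.TTheory GRing.Theory Num.Theory.
Import numFieldNormedType.Exports.
Local Open Scope classical_set_scope.
Local Open Scope ring_scope.

Definition pt (R : realType) (n : nat) := ('rV[R]_n * R)%type.

Definition edist (R : realType) (n : nat) (p q : pt R n) : R :=
  Num.sqrt (\sum_(i < n) (p.1 0 i - q.1 0 i) ^+ 2 + (p.2 - q.2) ^+ 2).

Definition setdist (R : realType) (n : nat) (p : pt R n) (A : set (pt R n)) : R :=
  inf [set edist p q | q in A].

Definition epigraph (R : realType) (n : nat) (f : 'rV[R]_n -> R) : set (pt R n) :=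
  [set p | f p.1 <= p.2].

Definition equiset (R : realType) (n : nat) (K L : set (pt R n)) (x : 'rV[R]_n) : set R :=
  [set y | setdist (x, y) K = setdist (x, y) L].
Definition Gplus (R : realType) (n : nat) (K L : set (pt R n)) (x : 'rV[R]_n) : R :=
  sup (equiset K L x).
Definition Gminus (R : realType) (n : nat) (K L : set (pt R n)) (x : 'rV[R]_n) : R :=
  inf (equiset K L x).

Definition convex_set_pt (R : realType) (n : nat) (K : set (pt R n)) : Prop :=
  forall p q : pt R n, K p -> K q -> forall t : R, 0 <= t <= 1 ->
    K (t *: p.1 + (1 - t) *: q.1, t * p.2 + (1 - t) * q.2).

Definition convex_fun_rV (R : realType) (n : nat) (f : 'rV[R]_n -> R) : Prop :=
  forall x y : 'rV[R]_n, forall t : R, 0 <= t <= 1 ->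
    f (t *: x + (1 - t) *: y) <= t * f x + (1 - t) * f y.

(* Main.v *)
Require Import Defs.
From HB Require Import structures.
From mathcomp Require Import all_boot all_order all_algebra.
From mathcomp Require Import all_classical all_reals all_analysis.
Import Order.TTheory GRing.Theory Num.Theory.
Import numFieldNormedType.Exports.
Local Open Scope classical_set_scope.
Local Open Scope ring_scope.
From mathcomp Require Import ring lra.
Set Implicit Arguments. Unset Strict Implicit. Unset Printing Implicit Defensive.

Lemma cont_sum (R : realType) (T : topologicalType) (I : Type) (s : seq I) (F : I -> T -> R) :
  (forall i, continuous (F i)) -> continuous (fun t => \sum_(i <- s) F i t).
Proof.
move=> cF; elim: s => [|i s IH].
  under eq_fun do rewrite big_nil. exact: cst_continuous.
under eq_fun do rewrite big_cons.
move=> t; apply: continuousD; [exact: cF| exact: IH].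
Qed.

Lemma cont_sq (R : realType) (T : topologicalType) (g : T -> R) :
  continuous g -> continuous (fun t => g t ^+ 2).
Proof.
move=> cg; under eq_fun do rewrite expr2.
move=> t; apply: continuousM; exact: cg.
Qed.

Section Geo.
Variables (R : realType) (n : nat).
Local Notation P := ('rV[R]_n * R)%type.

Definition hsq (a b : 'rV[R]_n) : R := \sum_(i < n) (a 0 i - b 0 i) ^+ 2.
Definition sqd (p q : P) : R := hsq p.1 q.1 + (p.2 - q.2) ^+ 2.

Lemma edistE p q : Defs.edist p q = Num.sqrt (sqd p q). Proof. by []. Qed.
Lemma hsq_ge0 a b : 0 <= hsq a b.
Proof. by apply: sumr_ge0 => i _; exact: sqr_ge0. Qed.
Lemma sqd_self p : sqd p p = 0.
Proof. by rewrite /sqd /hsq big1 ?subrr ?expr0n ?add0r // => i _; rewrite subrr expr0n. Qed.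
Lemma sqd_ge0 p q : 0 <= sqd p q.
Proof. by apply: addr_ge0; [exact: hsq_ge0|exact: sqr_ge0]. Qed.
Lemma hsqC a b : hsq a b = hsq b a.
Proof. by apply: eq_bigr => i _; rewrite -sqrrN opprB. Qed.
Lemma sqdC p q : sqd p q = sqd q p.
Proof. by rewrite /sqd hsqC -sqrrN opprB. Qed.
Lemma hsq_eq0 a b : hsq a b = 0 -> a = b.
Proof.
move=> /eqP; rewrite psumr_eq0 => [/allP H|i _]; last exact: sqr_ge0.
apply/rowP => i.
by have := H i (mem_index_enum _); rewrite sqrf_eq0 subr_eq0 => /eqP.
Qed.
Lemma sqd_eq0 p q : sqd p q = 0 -> p = q.
Proof.
move=> /eqP; rewrite paddr_eq0 ?hsq_ge0 ?sqr_ge0 // => /andP[/eqP h /eqP e].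
move: e => /eqP; rewrite sqrf_eq0 subr_eq0 => /eqP e.
by case: p q h e => [a y] [b z] /= /hsq_eq0 -> ->.
Qed.
Lemma sqd_hsq (p q : P) : hsq p.1 q.1 <= sqd p q.
Proof. by rewrite /sqd lerDl sqr_ge0. Qed.
Lemma sqd_coord (p q : P) (i : 'I_n) : (p.1 0 i - q.1 0 i) ^+ 2 <= sqd p q.
Proof.
apply: le_trans (sqd_hsq p q).
rewrite /hsq (bigD1 i) //= lerDl; apply: sumr_ge0 => j _; exact: sqr_ge0.
Qed.
Lemma sqd_y (p q : P) : (p.2 - q.2) ^+ 2 <= sqd p q.
Proof. by rewrite /sqd lerDr hsq_ge0. Qed.

Lemma continuous_sqd p : continuous (sqd p).
Proof.
have h1 : continuous (fun t : P => hsq p.1 t.1).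
  apply: (cont_sum (F := fun i (t : P) => (p.1 0 i - t.1 0 i) ^+ 2)) => i.
  apply: cont_sq => t.
  have hc : continuous (fun t : P => t.1 0 i).
    move=> u; apply: (continuous_comp (f := fun t : P => t.1) (g := fun M : 'rV[R]_n => M 0 i)).
      exact: cvg_fst.
    exact: coord_continuous.
  exact: (continuousB (cst_continuous (x := p.1 0 i) (x0 := t)) (hc t)).
have h2 : continuous (fun t : P => (p.2 - t.2) ^+ 2).
  apply: cont_sq => t.
  have hc : continuous (fun t : P => t.2) by move=> u; exact: cvg_snd.
  exact: (continuousB (cst_continuous (x := p.2) (x0 := t)) (hc t)).
move=> q; exact: (continuousD (h1 q) (h2 q)).
Qed.

End Geo.

Lemma abs_le_sq (R : realType) (t S : R) : t ^+ 2 <= S -> `|t| <= S + 1.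
Proof.
move=> h; have a0 : 0 <= `|t| by [].
have e : `|t| ^+ 2 = t ^+ 2 by rewrite real_normK ?num_real.
rewrite -e in h; nra.
Qed.

Section Dist.
Variables (R : realType) (n : nat).
Local Notation P := ('rV[R]_n * R)%type.

Lemma setdist_le p (A : set P) q : A q -> setdist p A <= Num.sqrt (sqd p q).
Proof.
move=> Aq; apply: ge_inf; last by exists q.
by exists 0 => _ [q' _ <-]; exact: sqrtr_ge0.
Qed.

Lemma setdist_ge p (A : set P) m : A !=set0 ->
  (forall q, A q -> m <= Num.sqrt (sqd p q)) -> m <= setdist p A.
Proof.
move=> [q Aq] H; apply: lb_le_inf; first by exists (Defs.edist p q), q.
by move=> _ [q' Aq' <-]; apply: H.
Qed.

Lemma setdist_ge0 p (A : set P) : A !=set0 -> 0 <= setdist p A.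
Proof. by move=> A0; apply: setdist_ge => // q _; exact: sqrtr_ge0. Qed.

Lemma setdist_nearest p (S : set P) k : S k ->
  (forall q, S q -> sqd p k <= sqd p q) -> setdist p S = Num.sqrt (sqd p k).
Proof.
move=> Sk H; apply/eqP; rewrite eq_le setdist_le //=.
apply: setdist_ge; first by exists k.
by move=> q Sq; rewrite ler_sqrt ?H // sqd_ge0.
Qed.

Lemma nearest_compact (S : set P) p : compact S -> S !=set0 ->
  exists2 k, S k & forall q, S q -> sqd p k <= sqd p q.
Proof.
move=> cS S0.
have [k] := compact_EVT_min S0 cS (continuous_subspaceT (@continuous_sqd R n p)).
rewrite inE => Sk H; exists k => // q Sq; apply: H; by rewrite inE.
Qed.

Lemma nearest_closed (S : set P) p : closed S -> S !=set0 ->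
  exists2 k, S k & forall q, S q -> sqd p k <= sqd p q.
Proof.
move=> clS [q0 Sq0].
set c := sqd p q0 + 1.
set B : set P := [set v : 'rV[R]_n | forall i, `[p.1 0 i - c, p.1 0 i + c]%classic (v ord0 i)]
   `*` `[p.2 - c, p.2 + c]%classic.
have cB : compact B.
  have c1 : compact [set v : 'rV[R]_n | forall i, `[p.1 0 i - c, p.1 0 i + c]%classic (v ord0 i)].
    exact: (@rV_compact R n (fun i => `[p.1 0 i - c, p.1 0 i + c]%classic) (fun i => @segment_compact R _ _)).
  exact: (compact_setX c1 (@segment_compact R _ _)).
have inB q : sqd p q <= sqd p q0 -> B q.
  move=> hq; have hc : 0 <= sqd p q0 by exact: sqd_ge0.
  split => [i|] /=; rewrite in_itv /= -ler_distlC.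
    have := sqd_coord p q i; rewrite (_ : (0 : 'I_1) = ord0) //.
    move=> h; have := abs_le_sq (le_trans h hq); rewrite /c; lra.
  have := sqd_y p q => h; have := abs_le_sq (le_trans h hq); rewrite /c; lra.
have cBS : compact (B `&` S) by exact: compact_closedI.
have [k] := compact_EVT_min (A := B `&` S) (ex_intro _ q0 (conj (inB _ (lexx _)) Sq0)) cBS
   (continuous_subspaceT (@continuous_sqd R n p)).
rewrite inE => -[Bk Sk] H; exists k => // q Sq.
have [hq|hq] := leP (sqd p q) (sqd p q0).
  by apply: H; rewrite inE; split => //; exact: inB.
apply: le_trans (ltW hq); apply: H; rewrite inE; split => //; exact: inB.
Qed.

End Dist.

Lemma lip_cont (R : realType) (g : R -> R) :
  (forall u v, `|g u - g v| <= `|u - v|) -> continuous g.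
Proof.
move=> H y; apply/cvgrPdist_lt => e e0.
near=> t; apply: le_lt_trans (H _ _) _.
near: t; exact: cvgr_dist_lt.
Unshelve. all: by end_near.
Qed.

Lemma max_lip (R : realType) (e u v : R) : `|Num.max e u - Num.max e v| <= `|u - v|.
Proof.
have h1 := ler_norm (u - v); have h2 : -(u - v) <= `|u - v| by rewrite -normrN ler_norm.
rewrite /Num.max ler_norml; case: ltP => ?; case: ltP => ?; apply/andP; split; lra.
Qed.

Lemma max_cont (R : realType) (T : topologicalType) (g : T -> R) (e : R) :
  continuous g -> continuous (fun x => Num.max e (g x)).
Proof.
move=> cg x.
apply: (continuous_comp (f := g) (g := fun u => Num.max e u)); first exact: cg.
by apply: lip_cont => a b; exact: max_lip.
Qed.

Lemma sqrt_lip (R : realType) (H a b : R) : 0 <= H ->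
  Num.sqrt (H + a ^+ 2) <= Num.sqrt (H + b ^+ 2) + `|a - b|.
Proof.
move=> H0; set s := Num.sqrt (H + b ^+ 2).
have s0 : 0 <= s := sqrtr_ge0 _.
have s2 : s ^+ 2 = H + b ^+ 2 by rewrite sqr_sqrtr // addr_ge0 // sqr_ge0.
have sb : `|b| <= s by rewrite -sqrtr_sqr ler_wsqrtr // lerDr.
have ab : `|a| <= `|b| + `|a - b|.
  by rewrite addrC; apply: le_trans (ler_normD _ _); rewrite subrK.
have w0 : 0 <= `|a - b| by [].
have v0 : 0 <= `|b| by [].
have u0 : 0 <= `|a| by [].
rewrite -[X in _ <= X]ger0_norm ?addr_ge0 // -sqrtr_sqr ler_sqrt ?sqr_ge0 //.
have ea : a ^+ 2 = `|a| ^+ 2 by rewrite real_normK ?num_real.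
have eb : b ^+ 2 = `|b| ^+ 2 by rewrite real_normK ?num_real.
rewrite ea; rewrite eb in s2.
nra.
Qed.

Lemma cont_segment (R : realType) n (f : 'rV[R]_n -> R) (x a : 'rV[R]_n) c :
  continuous f -> f a < c ->
  exists2 l : R, 0 < l < 1 & f (x + l *: (a - x)) < c.
Proof.
move=> cf fac.
set g := fun l : R => f (x + l *: (a - x)).
have g1 : g 1 = f a by rewrite /g scale1r addrC subrK.
have cg : {for 1, continuous g}.
  apply: (continuous_comp (f := fun l : R => x + l *: (a - x))).
    apply: continuousD; first exact: cst_continuous.
    exact: scalel_continuous.
  exact: cf.
have := cg; move=> /cvgrPdist_lt /(_ (c - f a)); rewrite subr_gt0 => /(_ fac).
move=> /nbhs_ballP [d d0 Hd].
exists (Num.max (2^-1) (1 - d / 2)).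
  apply/andP; split; first by rewrite lt_max; apply/orP; left.
  rewrite gt_max; apply/andP; split; first lra.
  rewrite ltrBlDr ltrDl; exact: divr_gt0.
have := Hd (Num.max (2^-1) (1 - d / 2)).
rewrite -ball_normE /ball_ /= g1 => H.
have : `|f a - g (Num.max (2^-1) (1 - d / 2))| < c - f a.
  apply: H; rewrite ger0_norm; last first.
    by rewrite subr_ge0 ge_max; apply/andP; split; [lra| rewrite lerBlDr lerDl; apply: ltW; exact: divr_gt0].
  rewrite ltrBlDr; have : 1 - d / 2 <= Num.max (2^-1) (1 - d / 2) by rewrite le_max lexx orbT.
  have : 0 < d / 2 by exact: divr_gt0.
  lra.
by rewrite /g ltr_norml => /andP[h _]; lra.
Qed.

Section Line.
Variables (R : realType) (n : nat).
Local Notation P := ('rV[R]_n * R)%type.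

Lemma sqd_line (x : 'rV[R]_n) y (q : P) : sqd (x, y) q = hsq x q.1 + (y - q.2) ^+ 2.
Proof. by []. Qed.

Lemma setdist_lip1 (x : 'rV[R]_n) y y' (S : set P) : S !=set0 ->
  setdist (x, y) S <= setdist (x, y') S + `|y - y'|.
Proof.
move=> S0; rewrite -lerBlDr; apply: setdist_ge => // q Sq.
rewrite lerBlDr; apply: le_trans (setdist_le _ Sq) _.
rewrite !sqd_line.
have -> : y - y' = (y - q.2) - (y' - q.2) by rewrite opprB addrA subrK.
exact: sqrt_lip (hsq_ge0 _ _).
Qed.

Lemma setdist_cont (x : 'rV[R]_n) (S : set P) : S !=set0 ->
  continuous (fun y => setdist (x, y) S).
Proof.
move=> S0; apply: lip_cont => u v; rewrite ler_norml.
have h1 := setdist_lip1 x u v S0; have h2 := setdist_lip1 x v u S0.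
rewrite distrC in h2; apply/andP; split; lra.
Qed.

Lemma setdist_mono (x : 'rV[R]_n) y y' (L : set P) : L !=set0 ->
  (forall q t, L q -> 0 <= t -> L (q.1, q.2 + t)) -> y <= y' ->
  setdist (x, y') L <= setdist (x, y) L.
Proof.
move=> L0 up yy; apply: setdist_ge => // q Lq.
have Lq' := up q (y' - y) Lq; rewrite subr_ge0 in Lq'; have {}Lq' := Lq' yy.
apply: le_trans (setdist_le _ Lq') _.
rewrite !sqd_line /=.
by have -> : y' - (q.2 + (y' - y)) = y - q.2 by rewrite opprD addrA addrC opprB addrA subrK addrC.
Qed.

Lemma epi_closed (f : 'rV[R]_n -> R) : continuous f -> closed (epigraph f).
Proof.
move=> cf.
have -> : epigraph f = (fun q : P => q.2 - f q.1) @^-1` [set z | 0 <= z].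
  by apply/seteqP; split => q /=; rewrite /epigraph /= subr_ge0.
apply: (proj1 (continuous_closedP _)); last exact: closed_ge.
move=> q; apply: continuousB; first exact: cvg_snd.
apply: (continuous_comp (f := fun t : P => t.1)); first exact: cvg_fst.
exact: cf.
Qed.

Lemma epi_up (f : 'rV[R]_n -> R) q t : epigraph f q -> 0 <= t -> epigraph f (q.1, q.2 + t).
Proof. by rewrite /epigraph /= => h t0; apply: le_trans h _; rewrite lerDl. Qed.

Lemma epi_n0 (f : 'rV[R]_n -> R) : epigraph f !=set0.
Proof. by exists (0, f 0); rewrite /epigraph /=. Qed.

End Line.

Section Uniq.
Variables (R : realType) (n : nat).
Local Notation P := ('rV[R]_n * R)%type.

Lemma hsq_seg (x a : 'rV[R]_n) (l : R) : hsq x (x + l *: (a - x)) = l ^+ 2 * hsq x a.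
Proof.
rewrite /hsq mulr_sumr; apply: eq_bigr => i _; rewrite !mxE; ring.
Qed.

Lemma sq_lt (u v : R) : 0 <= u -> u < v -> u ^+ 2 < v ^+ 2.
Proof. move=> u0 uv; nra. Qed.

Lemma uniq_equi (K : set P) (f : 'rV[R]_n -> R) (x : 'rV[R]_n) (y1 y2 : R) :
  compact K -> K !=set0 ->
  (forall k s, K k -> 0 < s -> s <= k.2 -> K (k.1, s)) ->
  (forall a, 0 < f a) -> continuous f -> K `&` epigraph f = set0 ->
  setdist (x, y1) K = setdist (x, y1) (epigraph f) ->
  setdist (x, y2) K = setdist (x, y2) (epigraph f) -> y1 < y2 -> False.
Proof.
move=> cK K0 hC fpos cf disj e1 e2 y12.
set L := epigraph f.
have L0 : L !=set0 := epi_n0 f.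
have clL : closed L := epi_closed cf.
have Lup := @epi_up R n f.
have [[kx z] Kk hk] := nearest_compact (x, y2) cK K0.
have [[a b] Lq hq] := nearest_closed (x, y1) clL L0.
set H := hsq x kx; set Hq := hsq x a.
have H0 : 0 <= H := hsq_ge0 _ _.
have Hq0 : 0 <= Hq := hsq_ge0 _ _.
have dK2 : setdist (x, y2) K = Num.sqrt (H + (y2 - z) ^+ 2) := setdist_nearest Kk hk.
have dL1 : setdist (x, y1) L = Num.sqrt (Hq + (y1 - b) ^+ 2) := setdist_nearest Lq hq.
set r2 := H + (y2 - z) ^+ 2.
have r20 : 0 <= r2 by rewrite addr_ge0 // sqr_ge0.
have hL2 : forall Q, L Q -> r2 <= sqd (x, y2) Q.
  move=> Q LQ; rewrite -ler_sqrt ?sqd_ge0 // -dK2 e2; exact: setdist_le.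
have hK1 : forall k', K k' -> sqd (x, y1) k' < Hq + (y1 - b) ^+ 2 -> False.
  move=> k' Kk' lt; have := setdist_le (x, y1) Kk'.
  by rewrite e1 dL1 ler_sqrt ?sqd_ge0 // leNgt lt.
have fab : f a <= b := Lq.
have bpos : 0 < b := lt_le_trans (fpos a) fab.
have disjP : forall p, K p -> L p -> False.
  by move=> p Kp Lp; have : (K `&` L) p by []; rewrite disj.
have d0 : 0 < y2 - y1 by rewrite subr_gt0.
have [z0|zpos] := leP z 0.
  apply: (hK1 (kx, z) Kk); rewrite sqd_line /= -/H.
  have := hL2 (a, b) Lq; rewrite sqd_line /= -/Hq => h; rewrite /r2 in h.
  have hint : 0 < (y2 - y1) * (b - z) by apply: mulr_gt0 => //; lra.
  nra.
have zy2 : z <= y2.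
  rewrite leNgt; apply/negP => y2z.
  set s := Num.max y2 (z / 2).
  have s0 : 0 < s by rewrite lt_max; apply/orP; right; exact: divr_gt0.
  have sz : s <= z by rewrite ge_max; apply/andP; split; [exact: ltW| lra].
  have ys : y2 <= s by rewrite le_max lexx.
  have sz' : s < z by rewrite gt_max; apply/andP; split; [by []| lra].
  have := hk (kx, s) (hC (kx, z) s Kk s0 sz); rewrite !sqd_line /= -/H.
  have : (s - y2) ^+ 2 < (z - y2) ^+ 2 by apply: sq_lt; lra.
  rewrite -(sqrrN (y2 - s)) -(sqrrN (y2 - z)) !opprB; lra.
have [dz|dz] := ltP (y2 - y1) z.
  have Kk' : K (kx, z - (y2 - y1)).
    by apply: (hC (kx, z)) => //=; [rewrite subr_gt0| rewrite lerBlDr lerDl ltW].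
  have sk' : sqd (x, y1) (kx, z - (y2 - y1)) = r2.
    by rewrite sqd_line /= -/H /r2; congr (_ + _); congr (_ ^+ 2); ring.
  have eqL : Hq + (y1 - b) ^+ 2 = r2.
    apply/eqP; rewrite eq_le; apply/andP; split.
      by have := setdist_le (x, y1) Kk'; rewrite e1 dL1 sk' ler_sqrt.
    have := setdist_mono x L0 Lup (ltW y12).
    by rewrite dL1 -e2 dK2 ler_sqrt // addr_ge0 // sqr_ge0.
  have [by1|y1b|by1] := ltgtP b y1.
  - have La : L (a, y1) by rewrite /L /epigraph /=; lra.
    have := hq (a, y1) La; rewrite !sqd_line /= subrr expr0n /= addr0 -/Hq.
    have : 0 < (y1 - b) ^+ 2 by rewrite exprn_gt0 // subr_gt0.
    lra.
  - set s := Num.min b y2.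
    have sy2 : s <= y2 by rewrite ge_min lexx orbT.
    have y1s : y1 < s by rewrite lt_min; apply/andP; split.
    have sb : s <= b by rewrite ge_min lexx.
    have := setdist_mono x L0 Lup sy2; rewrite -e2 dK2 => h1.
    have h2 := setdist_le (x, s) Lq; rewrite sqd_line /= -/Hq in h2.
    have h3 : Hq + (s - b) ^+ 2 < r2.
      rewrite -eqL; have : (b - s) ^+ 2 < (b - y1) ^+ 2 by apply: sq_lt; lra.
      rewrite -(sqrrN (s - b)) -(sqrrN (y1 - b)) !opprB; lra.
    have := le_trans h1 h2; rewrite ler_sqrt ?addr_ge0 ?sqr_ge0 //; rewrite /r2 in h3; lra.
  - move: eqL; rewrite by1 subrr expr0n /= addr0 => eqL.
    have [r0|rpos] := eqVneq r2 0.
      move: sk'; rewrite r0 => /sqd_eq0 e1p.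
      have : sqd (x, y1) (a, b) = 0 by rewrite sqd_line /= -/Hq by1 subrr expr0n /= addr0 eqL.
      move=> /sqd_eq0 e2p.
      by apply: (disjP (x, y1)); [rewrite e1p | rewrite e2p].
    have rp : 0 < r2 by rewrite lt_def rpos r20.
    have fay2 : f a < y2 by apply: le_lt_trans fab _; rewrite by1.
    have [l /andP[l0 l1] fl] := cont_segment x cf fay2.
    have LQ : L (x + l *: (a - x), y2) by rewrite /L /epigraph /=; exact: ltW.
    have := hL2 _ LQ; rewrite sqd_line /= subrr expr0n /= addr0 hsq_seg -/Hq eqL.
    have : l ^+ 2 < 1 by rewrite expr2; nra.
    nra.
  have y1e : y1 <= y2 - z by lra.
  have sym (u v : R) : (u - v) ^+ 2 = (v - u) ^+ 2 by rewrite -sqrrN opprB.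
  have [y1n|y1p] := leP y1 0.
    set s := Num.min z b / 2.
    have mz : Num.min z b <= z by rewrite ge_min lexx.
    have mb : Num.min z b <= b by rewrite ge_min lexx orbT.
    have m0 : 0 < Num.min z b by rewrite lt_min zpos bpos.
    have s0 : 0 < s by rewrite /s; lra.
    have sz : s <= z by rewrite /s; lra.
    apply: (hK1 (kx, s) (hC (kx, z) s Kk s0 sz)); rewrite sqd_line /= -/H.
    have yz0 : 0 <= (y2 - z) ^+ 2 := sqr_ge0 _.
    have [by2|by2] := leP y2 b.
      have := hL2 (a, b) Lq; rewrite sqd_line /= -/Hq /r2 => h.
      have key : (s - y1) ^+ 2 < (y2 - y1) ^+ 2 by apply: sq_lt; rewrite /s; lra.
      have id : (y1 - b) ^+ 2 = (y2 - b) ^+ 2 + 2 * ((y2 - y1) * (b - y2)) + (y2 - y1) ^+ 2 by ring.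
      have hint : 0 <= (y2 - y1) * (b - y2) by apply: mulr_ge0; lra.
      rewrite (sym y1 s); lra.
    have LQ : L (a, y2) by rewrite /L /epigraph /=; lra.
    have := hL2 _ LQ; rewrite sqd_line /= subrr expr0n /= addr0 -/Hq /r2 => h.
    have key : (s - y1) ^+ 2 < (b - y1) ^+ 2 by apply: sq_lt; rewrite /s; lra.
    rewrite (sym y1 s) (sym y1 b); lra.
  have [s [mz my s0 key]] : exists s, [/\ s <= z, s <= y1, 0 < s & (y1 - s) ^+ 2 < (y2 - z) ^+ 2].
    have [h|h] := leP y1 z.
      by exists y1; split => //; rewrite subrr expr0n /= exprn_gt0 //; lra.
    by exists z; split => //; [lra | apply: sq_lt; lra].
  apply: (hK1 (kx, s) (hC (kx, z) s Kk s0 mz)); rewrite sqd_line /= -/H.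
  have [by2|by2] := leP y2 b.
    have := hL2 (a, b) Lq; rewrite sqd_line /= -/Hq /r2 => h.
    have : (y2 - b) ^+ 2 <= (y1 - b) ^+ 2.
      rewrite (sym y2 b) (sym y1 b) -subr_ge0.
      have -> : (b - y1) ^+ 2 - (b - y2) ^+ 2 = (y2 - y1) * (2 * b - y1 - y2) by ring.
      apply: mulr_ge0; lra.
    lra.
  have LQ : L (a, y2) by rewrite /L /epigraph /=; lra.
  have := hL2 _ LQ; rewrite sqd_line /= subrr expr0n /= addr0 -/Hq /r2 => h.
  have := sqr_ge0 (y1 - b); lra.
Qed.
End Uniq.

Section IP.
Variables (R : realType) (n : nat).
Local Notation P := ('rV[R]_n * R)%type.

Definition ip (u v : 'rV[R]_n) : R := \sum_(i < n) u 0 i * v 0 i.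

Lemma ipD (u a b : 'rV[R]_n) : ip u (a + b) = ip u a + ip u b.
Proof. by rewrite /ip -big_split; apply: eq_bigr => i _ /=; rewrite !mxE; ring. Qed.
Lemma ipB (u a b : 'rV[R]_n) : ip u (a - b) = ip u a - ip u b.
Proof. by rewrite /ip -sumrB; apply: eq_bigr => i _; rewrite !mxE; ring. Qed.
Lemma ipZ (u a : 'rV[R]_n) t : ip u (t *: a) = t * ip u a.
Proof. by rewrite /ip mulr_sumr; apply: eq_bigr => i _; rewrite !mxE; ring. Qed.
Lemma ip0 (u : 'rV[R]_n) : ip u 0 = 0.
Proof. by rewrite /ip big1 // => i _; rewrite mxE mulr0. Qed.
Lemma ip_hsq (x k : 'rV[R]_n) : ip (x - k) (x - k) = hsq x k.
Proof. by rewrite /ip /hsq; apply: eq_bigr => i _; rewrite !mxE; ring. Qed.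
Lemma ip_ge0 (u : 'rV[R]_n) : 0 <= ip u u.
Proof. by apply: sumr_ge0 => i _; rewrite -expr2 sqr_ge0. Qed.
Lemma hsq_shift (x w : 'rV[R]_n) t : hsq x (x + t *: w) = t ^+ 2 * ip w w.
Proof. by rewrite /hsq /ip mulr_sumr; apply: eq_bigr => i _; rewrite !mxE; ring. Qed.
Lemma hsq_comb (x k q : 'rV[R]_n) t :
  hsq x (t *: q + (1 - t) *: k) = hsq x k - 2 * t * ip (x - k) (q - k) + t ^+ 2 * hsq q k.
Proof.
rewrite /hsq /ip !mulr_sumr -sumrB -big_split /=; apply: eq_bigr => i _ /=; rewrite !mxE; ring.
Qed.

Lemma continuous_ip (w : 'rV[R]_n) : continuous (fun v : 'rV[R]_n => ip w v).
Proof.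
apply: (cont_sum (F := fun i (v : 'rV[R]_n) => w 0 i * v 0 i)) => i v.
apply: continuousM; first exact: cst_continuous.
exact: coord_continuous.
Qed.

Lemma continuous_fst_P : continuous (fun q : P => q.1).
Proof. by move=> q; exact: cvg_fst. Qed.
Lemma continuous_snd_P : continuous (fun q : P => q.2).
Proof. by move=> q; exact: cvg_snd. Qed.

Lemma continuous_ip1 (w : 'rV[R]_n) : continuous (fun q : P => ip w q.1).
Proof.
move=> q; apply: (continuous_comp (f := fun q : P => q.1)); first exact: continuous_fst_P.
exact: continuous_ip.
Qed.

Lemma continuous_hsq1 (x : 'rV[R]_n) : continuous (fun q : P => hsq x q.1).
Proof.
apply: (cont_sum (F := fun i (t : P) => (x 0 i - t.1 0 i) ^+ 2)) => i.
apply: cont_sq => t.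
have hc : continuous (fun t : P => t.1 0 i).
  move=> u; apply: (continuous_comp (f := fun t : P => t.1) (g := fun M : 'rV[R]_n => M 0 i)).
    exact: cvg_fst.
  exact: coord_continuous.
exact: (continuousB (cst_continuous (x := x 0 i) (x0 := t)) (hc t)).
Qed.

End IP.

Section CE.
Variables (R : realType) (n : nat).
Local Notation P := ('rV[R]_n * R)%type.

Lemma closed_snd_le : closed [set q : P | q.2 <= 0].
Proof.
have -> : [set q : P | q.2 <= 0] = (fun q : P => q.2) @^-1` [set z : R | z <= 0] by [].
apply: (proj1 (continuous_closedP _)); first exact: continuous_snd_P.
exact: closed_le.
Qed.

Lemma gap (K : set P) xs ys x0 y1 y2 : compact K -> convex_set_pt K ->
  K (xs, ys) -> ys <= 0 -> ~ K (x0, y1) -> K (x0, y2) -> 0 < y1 -> y1 < y2 ->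
  exists w xf zf, [/\ K (xf, zf), (forall q, K q -> ip w q.1 <= ip w xf),
     (forall q, K q -> q.1 = xf -> 0 < q.2) & 0 < ip w w].
Proof.
move=> cK hconv Ks ys0 nK1 K2 y10 y12.
have Km0 : (K `&` [set q : P | q.2 <= 0]) !=set0 by exists (xs, ys).
have cKm : compact (K `&` [set q : P | q.2 <= 0]) := compact_closedI cK closed_snd_le.
have [km] := compact_EVT_min Km0 cKm (continuous_subspaceT (@continuous_hsq1 R n x0)).
rewrite inE => -[Kkm km0] hkm.
have km0' : km.2 <= 0 := km0.
have hkm' : forall q, K q -> q.2 <= 0 -> hsq x0 km.1 <= hsq x0 q.1.
  by move=> q Kq q0; apply: hkm; rewrite inE.
set w := x0 - km.1.
have W0 : 0 < ip w w.
  rewrite /w ip_hsq lt_def hsq_ge0 andbT; apply/negP => /eqP /hsq_eq0 e.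
  apply: nK1.
  have d0 : 0 < y2 - km.2 by lra.
  set t := (y2 - y1) / (y2 - km.2).
  have t0 : 0 <= t by rewrite /t divr_ge0 //; lra.
  have t1 : t <= 1 by rewrite /t ler_pdivrMr // mul1r; lra.
  have := hconv km (x0, y2) Kkm K2 t (introT andP (conj t0 t1)).
  rewrite /= -e -scalerDl subrKC scale1r.
  have -> : t * km.2 + (1 - t) * y2 = y1.
    rewrite /t; field; lra.
  by [].
have var : forall q, K q -> q.2 <= 0 -> ip w (q.1 - km.1) <= 0.
  move=> q Kq q0; rewrite leNgt; apply/negP => c0.
  set c := ip w (q.1 - km.1); set V := hsq q.1 km.1.
  have V0 : 0 <= V := hsq_ge0 _ _.
  set t := Num.min 1 (c / (V + 1)).
  have t1 : t <= 1 by rewrite ge_min lexx.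
  have t2 : t <= c / (V + 1) by rewrite ge_min lexx orbT.
  have t0 : 0 < t by rewrite lt_min ltr01 divr_gt0 //; lra.
  have tV : t * (V + 1) <= c by rewrite -ler_pdivlMr //; lra.
  have Kt := hconv q km Kq Kkm t (introT andP (conj (ltW t0) t1)).
  have := hkm' _ Kt; rewrite /= hsq_comb -/w -/c -/V.
  have : t * q.2 + (1 - t) * km.2 <= 0.
    have : 0 <= 1 - t by lra.
    nra.
  move=> h /(_ h); nra.
have K0 : K !=set0 by exists (xs, ys).
have [kf] := compact_EVT_max K0 cK (continuous_subspaceT (@continuous_ip1 R n w)).
rewrite inE => Kkf hkf.
have hkf' : forall q, K q -> ip w q.1 <= ip w kf.1 by move=> q Kq; apply: hkf; rewrite inE.
exists w, kf.1, kf.2; split => //.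
  by case: kf Kkf {hkf hkf'}.
move=> q Kq eq; rewrite ltNge; apply/negP => q0.
have := var q Kq q0; rewrite ipB eq.
have := hkf' _ K2; rewrite /=.
have : ip w w = ip w x0 - ip w km.1 by rewrite -ipB.
lra.
Qed.


Lemma counter (K : set P) : compact K -> convex_set_pt K ->
  (exists p, K p /\ p.2 <= 0) ->
  (exists x0 y1 y2, [/\ 0 < y1, y1 < y2, ~ K (x0, y1) & K (x0, y2)]) ->
  exists f : 'rV[R]_n -> R, [/\ (forall x, 0 < f x), continuous f, convex_fun_rV f,
      K `&` epigraph f = set0 & exists x, Gminus K (epigraph f) x <> Gplus K (epigraph f) x].
Proof.
move=> cK hconv [[xs ys] [Ks ys0]] [x0 [y1 [y2 [y10 y12 nK1 K2]]]].
have [w [xf [zf [Kf hmax hpos W0]]]] := gap cK hconv Ks ys0 nK1 K2 y10 y12.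
set W := ip w w.
have K0 : K !=set0 by exists (xs, ys).
have zf0 : 0 < zf := hpos _ Kf erefl.
have [k0 Kk0 hk0] := nearest_compact (xf, 0) cK K0.
set D0 := sqd (xf, 0) k0.
have D0p : 0 < D0.
  rewrite lt_def sqd_ge0 andbT; apply/eqP => /sqd_eq0 e.
  by have := hpos k0 Kk0; rewrite -e /= ltxx => /(_ erefl).
have dK0 : setdist (xf, 0) K = Num.sqrt D0 := setdist_nearest Kk0 hk0.
have [kY] := compact_EVT_max K0 cK (continuous_subspaceT (@continuous_snd_P R n)).
rewrite inE => KkY hY.
set Y := kY.2.
have hY' : forall q, K q -> q.2 <= Y by move=> q Kq; apply: hY; rewrite inE.
have zfY : zf <= Y := hY' _ Kf.
set A := Y + 1.
have A0 : 0 < A by rewrite /A; lra.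
have A1 : 1 < A by rewrite /A; lra.
set eps := Num.min 1 (D0 / 4).
have e1 : eps <= 1 by rewrite ge_min lexx.
have e2 : eps <= D0 / 4 by rewrite ge_min lexx orbT.
have e0 : 0 < eps by rewrite lt_min ltr01 /=; lra.
have WD0 : 0 < W * D0 by exact: mulr_gt0.
set M := 1 + 2 * A ^+ 2 / (W * D0).
have M1 : 1 <= M by rewrite /M lerDl divr_ge0 // ?mulr_ge0 ?sqr_ge0 // ltW.
have M0 : 0 < M by lra.
set f := fun x : 'rV[R]_n => Num.max eps (A - M * ip w (x - xf)).
have fge : forall x, A - M * ip w (x - xf) <= f x by move=> x; rewrite le_max lexx orbT.
have fge' : forall x, eps <= f x by move=> x; rewrite le_max lexx.
have fpos : forall x, 0 < f x by move=> x; exact: lt_le_trans e0 (fge' x).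
have fxf : f xf = A.
  rewrite /f subrr ip0 mulr0 subr0; apply/max_idPr; lra.
have cf : continuous f.
  have ef : f = fun x => Num.max eps (A - M * (ip w x - ip w xf)).
    by apply: funext => y; rewrite /f ipB.
  rewrite ef; apply: max_cont => x.
  have c1 : {for x, continuous (fun x : 'rV[R]_n => ip w x - ip w xf)}.
    exact: (continuousB (@continuous_ip R n w x) (cst_continuous (x := ip w xf) (x0 := x))).
  have c3 : {for x, continuous (fun x : 'rV[R]_n => M * (ip w x - ip w xf))}.
    exact: (continuousM (cst_continuous (x := M) (x0 := x)) c1).
  exact: (continuousB (cst_continuous (x := A) (x0 := x)) c3).
have convf : convex_fun_rV f.
  move=> a b t /andP[t0 t1].
  have ipc : ip w (t *: a + (1 - t) *: b - xf) = t * ip w (a - xf) + (1 - t) * ip w (b - xf).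
    rewrite !ipB ipD !ipZ; ring.
  have t1' : 0 <= 1 - t by lra.
  have ha := fge a; have hb := fge b; have ha' := fge' a; have hb' := fge' b.
  rewrite {1}/f ge_max; apply/andP; split; first nra.
  rewrite ipc; nra.
have disj : K `&` epigraph f = set0.
  apply/seteqP; split => // q [Kq]; rewrite /epigraph => fq.
  have hq : ip w (q.1 - xf) <= 0 by rewrite ipB subr_le0 hmax.
  have fq' : f q.1 <= q.2 := fq.
  have hM : M * ip w (q.1 - xf) <= 0 by rewrite pmulr_rle0.
  have := fge q.1; have := hY' q Kq; rewrite /A; lra.
exists f; split => //.
set L := epigraph f.
have L0 : L !=set0 := epi_n0 f.
have clL : closed L := epi_closed cf.
have Lup := @epi_up R n f.
set h := fun y => setdist (xf, y) K - setdist (xf, y) L.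
have ch : continuous h.
  move=> y; exact: (continuousB (@setdist_cont R n xf K K0 y) (@setdist_cont R n xf L L0 y)).
set tau := A / (M * W).
have MW0 : 0 < M * W by exact: mulr_gt0.
have tMW : tau * (M * W) = A by rewrite /tau divfK // gt_eqF.
have LQ : L (xf + tau *: w, eps).
  rewrite /L /epigraph /= /f.
  have -> : xf + tau *: w - xf = tau *: w by rewrite addrC addKr.
  rewrite ipZ -/W; have -> : A - M * (tau * W) = 0 by rewrite -tMW; ring.
  by rewrite /Num.max; case: ltP => _; lra.
have h0 : 0 < h 0.
  have := setdist_le (xf, 0) LQ; rewrite sqd_line /= hsq_shift -/W sub0r sqrrN => hl.
  have X : tau ^+ 2 * W * (M ^+ 2 * W) = A ^+ 2 by rewrite -tMW; ring.
  have MWD : M * W * D0 = W * D0 + 2 * A ^+ 2.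
    rewrite /M; field; rewrite !gt_eqF //.
  have T1 : tau ^+ 2 * W <= D0 / 2.
    have M2W : 0 < M ^+ 2 * W by rewrite mulr_gt0 // exprn_gt0.
    rewrite -(ler_pM2r M2W) X.
    have : 0 <= (M ^+ 2 - M) * (W * D0) by apply: mulr_ge0; [rewrite expr2; nra | lra].
    have : A ^+ 2 = (M * W * D0 - W * D0) / 2 by rewrite MWD; field.
    move=> eA hh; rewrite eA; nra.
  have T2 : eps ^+ 2 <= D0 / 4 by rewrite expr2; nra.
  rewrite /h subr_gt0 dK0; apply: le_lt_trans hl _.
  rewrite ltr_sqrt //; lra.
have hzf : h zf < 0.
  have dKz : setdist (xf, zf) K = 0.
    apply/eqP; rewrite eq_le setdist_ge0 // andbT.
    by have := setdist_le (xf, zf) Kf; rewrite /sqd /= /hsq big1 ?subrr ?expr0n ?add0r ?sqrtr0 // => i _; rewrite subrr expr0n.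
  have [q Lq hq] := nearest_closed (xf, zf) clL L0.
  rewrite /h dKz sub0r oppr_lt0 (setdist_nearest Lq hq) sqrtr_gt0 lt_def sqd_ge0 andbT.
  apply/eqP => /sqd_eq0 e.
  have hh : (K `&` L) (xf, zf) by split => //; rewrite e.
  by rewrite disj in hh.
have hbig : forall y, A <= y -> 0 < h y.
  move=> y Ay.
  have LA : L (xf, y) by rewrite /L /epigraph /= fxf.
  have dL : setdist (xf, y) L = 0.
    apply/eqP; rewrite eq_le setdist_ge0 // andbT.
    by have := setdist_le (xf, y) LA; rewrite sqd_self sqrtr0.
  have [k Kk hk] := nearest_compact (xf, y) cK K0.
  rewrite /h dL subr0 (setdist_nearest Kk hk) sqrtr_gt0 lt_def sqd_ge0 andbT.
  apply/eqP => /sqd_eq0 e.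
  have := hY' k Kk; rewrite -e /= => hy; rewrite /A in Ay; lra.
have zfA : zf <= A by rewrite /A; lra.
have [ya ya_in hya] : exists2 ya, ya \in `[0, zf] & h ya = 0.
  apply: IVT; [exact: ltW | exact: continuous_subspaceT |].
  have hA := hbig A (lexx A).
  by apply/andP; split; rewrite /Num.min /Num.max; case: ltP => ?; lra.
have [yb yb_in hyb] : exists2 yb, yb \in `[zf, A] & h yb = 0.
  apply: IVT; [exact: zfA | exact: continuous_subspaceT |].
  have hA := hbig A (lexx A).
  by apply/andP; split; rewrite /Num.min /Num.max; case: ltP => ?; lra.
move: ya_in yb_in; rewrite !in_itv /= => /andP[ya0 yaz] /andP[zyb ybA].
have ya0' : 0 < ya.
  rewrite lt_neqAle ya0 andbT; apply/eqP => e; rewrite -e in hya; lra.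
have zyb' : zf < yb.
  rewrite lt_neqAle zyb andbT; apply/eqP => e; rewrite -e in hyb; lra.
exists xf.
set E := equiset K L xf.
have EE : forall y, h y = 0 -> E y.
  by move=> y; rewrite /h => /eqP; rewrite subr_eq0 => /eqP.
have ubE : ubound E A.
  move=> y Ey; rewrite leNgt; apply/negP => Ay.
  by have := hbig y (ltW Ay); rewrite /h Ey subrr ltxx.
have supb : yb <= sup E := ub_le_sup (ex_intro _ A ubE) (EE _ hyb).
have infa : inf E < yb.
  have [hl|nhl] := pselect (has_lbound E).
    by apply: le_lt_trans (ge_inf hl (EE _ hya)) _; lra.
  by rewrite inf_out; [lra | case].
rewrite /Gminus /Gplus -/E => eq; lra.
Qed.

End CE.

Section Convex.
Variables (R : realType) (n : nat).
Variable f : 'rV[R]_n -> R.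
Hypothesis cvx : convex_fun_rV f.

Lemma cvx_1d (x0 v : 'rV[R]_n) (c t : R) : 0 < c -> `|t| <= c ->
  f (x0 + t *: v) <= Num.max (f (x0 - c *: v)) (f (x0 + c *: v)).
Proof.
move=> c0; rewrite ler_norml => /andP[t1 t2].
set l := (c - t) / (2 * c).
have l0 : 0 <= l by rewrite /l divr_ge0 //; lra.
have l1 : l <= 1 by rewrite /l ler_pdivrMr ?mulr_gt0 //; lra.
have e : x0 + t *: v = l *: (x0 - c *: v) + (1 - l) *: (x0 + c *: v).
  apply/rowP => i; rewrite !mxE /l; field; lra.
have H := cvx (x0 - c *: v) (x0 + c *: v) (introT andP (conj l0 l1)).
rewrite e; apply: le_trans H _.
have m1 : f (x0 - c *: v) <= Num.max (f (x0 - c *: v)) (f (x0 + c *: v)).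
  by rewrite /Num.max; case: ltP => ?; lra.
have m2 : f (x0 + c *: v) <= Num.max (f (x0 - c *: v)) (f (x0 + c *: v)).
  by rewrite /Num.max; case: ltP => ?; lra.
have : 0 <= 1 - l by lra.
nra.
Qed.

Lemma cvx_mid (a b : 'rV[R]_n) : f (2^-1 *: a + 2^-1 *: b) <= 2^-1 * f a + 2^-1 * f b.
Proof.
have h0 : (0 <= (2^-1 : R)) && ((2^-1 : R) <= 1).
  by apply/andP; split; lra.
have := cvx a b h0.
by have -> : (1 : R) - 2^-1 = 2^-1 by field.
Qed.

Lemma cvx_bound_k (x0 : 'rV[R]_n) (k : nat) : forall d : R, 0 < d -> exists M,
  forall h : 'rV[R]_n, (forall i : 'I_n, (k <= i)%N -> h 0 i = 0) ->
    (forall i, `|h 0 i| <= d) -> f (x0 + h) <= M.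
Proof.
elim: k => [|k IH] d d0.
  exists (f x0) => h hz _.
  have -> : h = 0 by apply/rowP => i; rewrite mxE hz.
  by rewrite addr0.
have [kn|kn] := leqP n k.
  have [M HM] := IH d d0; exists M => h hz hb; apply: HM => // i ki.
  by have := ltn_ord i; rewrite ltnNge (leq_trans kn ki).
set j : 'I_n := Ordinal kn.
have [M1 HM1] := IH (2 * d) (mulr_gt0 (ltr0n _ 2) d0).
set e := (delta_mx 0 j : 'rV[R]_n).
set M2 := Num.max (f (x0 - (2 * d) *: e)) (f (x0 + (2 * d) *: e)).
exists (2^-1 * M1 + 2^-1 * M2) => h hz hb.
set h' := h - h 0 j *: e.
have e1 : x0 + h = 2^-1 *: (x0 + 2 *: h') + 2^-1 *: (x0 + (2 * h 0 j) *: e).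
  by apply/rowP => i; rewrite /h' !mxE; field.
rewrite e1; apply: le_trans (cvx_mid _ _) _.
have b1 : f (x0 + 2 *: h') <= M1.
  apply: HM1 => i.
    move=> ki; rewrite /h' !mxE.
    have [ij|ij] := eqVneq i j.
      by rewrite ij eqxx /= mulr1 subrr mulr0.
    have ki' : (k < i)%N.
      by rewrite ltn_neqAle ki andbT; apply: contra ij => /eqP e2; apply/eqP/val_inj.
    by rewrite (hz i ki') andbF mulr0 subr0 mulr0.
  rewrite /h' !mxE.
  have [ij|ij] := eqVneq i j.
    by rewrite ij eqxx /= mulr1 subrr mulr0 normr0 ltW // mulr_gt0.
  rewrite andbF mulr0 subr0 normrM.
  have := hb i; rewrite ger0_norm //; lra.
have b2 : f (x0 + (2 * h 0 j) *: e) <= M2.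
  apply: cvx_1d; first exact: mulr_gt0.
  by rewrite normrM ger0_norm //; have := hb j; lra.
lra.
Qed.


Lemma cvx_bound (x0 : 'rV[R]_n) d : 0 < d -> exists M,
  forall h : 'rV[R]_n, (forall i, `|h 0 i| <= d) -> f (x0 + h) <= M.
Proof.
move=> d0; have [M HM] := cvx_bound_k x0 n d0; exists M => h hb; apply: HM => // i.
by rewrite leqNgt ltn_ord.
Qed.

Lemma near_coord (x0 : 'rV[R]_n) (t : R) : 0 < t ->
  \forall y \near x0, forall i, `|(y : 'rV[R]_n) 0 i - x0 0 i| <= t.
Proof.
move=> t0; apply/nbhs_ballP; exists t => // y hy i.
move: hy => [_ hy]; have := hy 0 i.
by rewrite /ball /= distrC => /ltW.
Qed.


Lemma cvx_cont : continuous f.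
Proof.
move=> x0; apply/(@cvgrPdist_lt _ _ _ (nbhs x0) _) => e e0.
have [M HM] := cvx_bound x0 ltr01.
have Mf : f x0 <= M.
  by have := HM 0; rewrite addr0; apply => i; rewrite mxE normr0 ler01.
set C := M - f x0 + 1.
have C0 : 0 < C by rewrite /C; lra.
set t := Num.min (2^-1) (e / (2 * C)).
have ec : 0 < e / (2 * C) by apply: divr_gt0 => //; lra.
have t1 : t <= 2^-1 by rewrite /t /Num.min; case: (ltP (2^-1) (e / (2 * C))) => ?; lra.
have t2 : t <= e / (2 * C) by rewrite /t /Num.min; case: (ltP (2^-1) (e / (2 * C))) => ?; lra.
have t0 : 0 < t.
  by rewrite /t /Num.min; case: (ltP (2^-1) (e / (2 * C))) => ?; lra.
have tC : t * C <= e / 2.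
  have E : e / (2 * C) * C = e / 2 by field; rewrite gt_eqF.
  by rewrite -E ler_pM2r.
near=> y.
have hy : forall i, `|y 0 i - x0 0 i| <= t by near: y; exact: near_coord.
set h := t^-1 *: (y - x0).
have hb : forall i, `|h 0 i| <= 1.
  move=> i; rewrite /h !mxE normrM ger0_norm; last by rewrite invr_ge0 ltW.
  by rewrite mulrC ler_pdivrMr // mul1r hy.
have hb' : forall i, `|(- h) 0 i| <= 1 by move=> i; rewrite mxE normrN hb.
have ey : y = t *: (x0 + h) + (1 - t) *: x0.
  by apply/rowP => i; rewrite /h !mxE; field; rewrite gt_eqF.
set s := (1 + t)^-1.
have ex : x0 = s *: y + (1 - s) *: (x0 + - h).
  by apply/rowP => i; rewrite /s /h !mxE; field; rewrite ?gt_eqF //; lra.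
have tl : 0 <= t <= 1 by apply/andP; split; lra.
have s0 : 0 < s by rewrite /s invr_gt0; lra.
have s1 : s <= 1 by rewrite /s invf_le1; lra.
have sl : 0 <= s <= 1 by apply/andP; split; lra.
have up : f y <= t * M + (1 - t) * f x0.
  rewrite {1}ey; apply: le_trans (cvx _ _ tl) _.
  have := HM h hb; have tt : 0 <= t by lra.
  nra.
have lo : f x0 <= s * f y + (1 - s) * M.
  rewrite {1}ex; apply: le_trans (cvx _ _ sl) _.
  have := HM _ hb'; have ss : 0 <= 1 - s by lra.
  nra.
have st : s * (1 + t) = 1 by rewrite /s mulVf // gt_eqF //; lra.
rewrite ltr_norml; apply/andP; split.
  have : t * (M - f x0) <= e / 2 by apply: le_trans tC; rewrite /C ler_pM2l //; lra.
  nra.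
have p : 0 < 1 + t by lra.
have L2 : (1 + t) * f x0 <= f y + t * M.
  have E : (1 + t) * (s * f y + (1 - s) * M) = f y + t * M.
    by rewrite /s; field; rewrite gt_eqF.
  by rewrite -E ler_wpM2l // ltW.
have : t * (M - f x0) <= e / 2 by apply: le_trans tC; rewrite /C ler_pM2l //; lra.
lra.
Unshelve. all: by end_near.
Qed.

End Convex.

Section Final.
Variables (R : realType) (n : nat).
Local Notation P := ('rV[R]_n * R)%type.

Lemma G_eq (K L : set P) x :
  (forall y1 y2, equiset K L x y1 -> equiset K L x y2 -> y1 < y2 -> False) ->
  Gminus K L x = Gplus K L x.
Proof.
move=> H; rewrite /Gminus /Gplus.
have [[a Ea]|E0] := pselect (exists a, equiset K L x a).
  have -> : equiset K L x = [set a].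
    apply/seteqP; split => [y Ey|y ->] //=.
    have [l|g|e] := ltgtP y a; [exfalso; exact: H y a Ey Ea l | exfalso; exact: H a y Ea Ey g | done].
  by rewrite sup1 inf1.
have -> : equiset K L x = set0.
  by apply/seteqP; split => y // Ey; apply: E0; exists y.
by rewrite sup0 inf0.
Qed.

End Final.

Theorem corollary8 (R : realType) (n : nat) (hn : (1 <= n)%N)
  (K : set ('rV[R]_n * R)%type)
  (hKconv : convex_set_pt K) (hKcomp : compact K)
  (hKpt : exists p, K p /\ p.2 <= 0) :
  let A := forall f : 'rV[R]_n -> R, (forall x, 0 < f x) -> continuous f ->
             K `&` epigraph f = set0 ->
             forall x, Gminus K (epigraph f) x = Gplus K (epigraph f) x in
  let B := forall f : 'rV[R]_n -> R, (forall x, 0 < f x) -> convex_fun_rV f ->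
             K `&` epigraph f = set0 ->
             forall x, Gminus K (epigraph f) x = Gplus K (epigraph f) x in
  let C := ~ exists (x0 : 'rV[R]_n) (y1 y2 : R),
             [/\ 0 < y1, y1 < y2, ~ K (x0, y1) & K (x0, y2)] in
  (A <-> B) /\ (B <-> C).
Proof.
move=> A B C.
have K0 : K !=set0 by case: hKpt => p [Kp _]; exists p.
have CA : C -> A.
  move=> hc f fpos cf disj x.
  have hC : forall k s, K k -> 0 < s -> s <= k.2 -> K (k.1, s).
    move=> [kx kz] s Kk s0 /= sk.
    have [e|lt] := eqVneq s kz; first by rewrite e.
    apply: contrapT => nK; apply: hc; exists kx, s, kz; split => //.
    by rewrite lt_neqAle lt sk.
  apply: G_eq => y1 y2 e1 e2 y12.
  exact: (@uniq_equi R n K f x y1 y2 hKcomp K0 hC fpos cf disj e1 e2 y12).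
have CB : C -> B.
  move=> hc f fpos cvxf disj; apply: (CA hc f fpos _ disj).
  exact: cvx_cont.
have AC : A -> C.
  move=> hA hex.
  have [f [fpos cf cvxf disj [x hx]]] := counter hKcomp hKconv hKpt hex.
  by apply: hx; apply: hA.
have BC : B -> C.
  move=> hB hex.
  have [f [fpos cf cvxf disj [x hx]]] := counter hKcomp hKconv hKpt hex.
  by apply: hx; apply: hB.
split; split => h.
- exact: CB (AC h).
- exact: CA (BC h).
- exact: BC h.
- exact: CB h.
Qed.
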